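(* Let $M>0$ and $0\le a<M$, and set $r_+=M+\sqrt{M^2-a^2}$, $\Delta(r)=r^2-2Mr+a^2$. Let $E,L_z,Q\in\mathbb{R}$ with $Q<0$ be such that there exists $\theta\in(0,\pi)$ with $\Theta(\theta,E,L_z,Q)\ge 0$, where $$\Theta(\theta,E,L_z,Q)=Q-\Big(\frac{L_z^2}{\sin^2\theta}-E^2a^2\Big)\cos^2\theta .$$ Let $K=Q+(aE-L_z)^2$ and $$R(r)=\big((r^2+a^2)E-aL_z\big)^2-\Delta(r)K = E^2r^4+(a^2E^2-Q-L_z^2)r^2+2MKr-a^2Q.$$ Then $R(r)>0$ for all $r\in(r_+,\infty)$.
   Context: This concerns null geodesics in the exterior region $r>r_+$ of a sub-extremal Kerr spacetime of mass $M$ and rotation parameter $a$, written in Boyer–Lindquist coordinates $(t,r,\theta,\phi)$. For a null geodesic with affine parameter, $E=-g(\partial_t,\dot\gamma)$ is the energy, $L_z=g(\partial_\phi,\dot\gamma)$ the axial angular momentum, $K$ Carter's constant and $Q=K-(aE-L_z)^2$; with $\Sigma=r^2+a^2\cos^2\theta$ these satisfy $\Sigma^2\dot r^2=R(r)$ and $\Sigma^2\dot\theta^2=\Theta(\theta,E,L_z,Q)$, so a null geodesic with these constants can only pass through points where $\Theta\ge 0$. *)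

(* Defs.v *)
From Stdlib Require Import Reals Lra.
Open Scope R_scope.

Definition r_plus (M a : R) : R := M + sqrt (M ^ 2 - a ^ 2).
Definition Delta (M a r : R) : R := r ^ 2 - 2 * M * r + a ^ 2.
Definition Theta (a th E Lz Q : R) : R :=
  Q - (Lz ^ 2 / (sin th) ^ 2 - E ^ 2 * a ^ 2) * (cos th) ^ 2.
Definition Kcarter (a E Lz Q : R) : R := Q + (a * E - Lz) ^ 2.
Definition Rpot (M a E Lz Q r : R) : R :=
  ((r ^ 2 + a ^ 2) * E - a * Lz) ^ 2 - Delta M a r * Kcarter a E Lz Q.

(* Main.v *)
Require Import Defs.
From Stdlib Require Import Reals Lra Psatz.
Open Scope R_scope.

Theorem lemma1 (M a E Lz Q : R) :
  0 < M -> 0 <= a -> a < M -> Q < 0 ->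
  (exists th, 0 < th < PI /\ 0 <= Theta a th E Lz Q) ->
  forall r, r_plus M a < r -> 0 < Rpot M a E Lz Q r.
Proof.
  intros HM Ha HaM HQ [th [Hth HT]] r Hr.
  unfold Theta in HT. unfold r_plus in Hr.
  assert (Hsin : 0 < sin th) by (apply sin_gt_0; lra).
  set (s := sin th ^ 2) in *. set (c := cos th ^ 2) in *.
  assert (Hs : 0 < s) by (unfold s; nra).
  assert (Hsc : s + c = 1) by (unfold s, c; pose proof (sin2_cos2 th); unfold Rsqr in *; nra).
  assert (Hc0 : 0 <= c) by (unfold c; nra).
  assert (HT2 : 0 <= Q * s - Lz^2 * c + E^2*a^2*c*s).
  { replace (Q * s - Lz^2 * c + E^2*a^2*c*s) with
      (s * (Q - (Lz ^ 2 / s - E ^ 2 * a ^ 2) * c)) by (field; lra).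
    apply Rmult_le_pos; lra. }
  assert (Hc : 0 < c).
  { destruct (Rle_lt_or_eq_dec 0 c Hc0) as [h|h]; auto.
    rewrite <- h in HT2. nra. }
  assert (HL : Lz^2 < E^2*a^2).
  { assert (Lz^2 * c < E^2*a^2*s*c) by nra.
    assert (Lz^2 < E^2*a^2*s) by nra.
    assert (0 <= E^2*a^2) by nra. nra. }
  assert (HE : 0 < E^2) by nra.
  assert (Ha2 : 0 < a^2) by nra.
  pose proof (sqrt_pos (M ^ 2 - a ^ 2)) as Hsq0.
  pose proof (sqrt_sqrt (M ^ 2 - a ^ 2)) as Hsq.
  assert (Hr0 : 0 < r) by lra.
  assert (HD : 0 < Defs.Delta M a r).
  { unfold Defs.Delta. assert (Hma : 0 <= M^2 - a^2) by nra.
    specialize (Hsq Hma). nra. }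
  unfold Rpot.
  destruct (Rlt_or_le (Kcarter a E Lz Q) 0) as [HK|HK].
  - assert (0 < - (Defs.Delta M a r * Kcarter a E Lz Q)) by nra. pose proof (pow2_ge_0 ((r ^ 2 + a ^ 2) * E - a * Lz)). lra.
  - replace (((r ^ 2 + a ^ 2) * E - a * Lz) ^ 2 - Defs.Delta M a r * Kcarter a E Lz Q)
      with (E^2*r^4 + (a^2*E^2 - Q - Lz^2)*r^2 + 2*M*Kcarter a E Lz Q*r - a^2*Q)
      by (unfold Defs.Delta, Kcarter; ring).
    assert (0 < E^2*r^4) by (apply Rmult_lt_0_compat; [lra| apply pow_lt; lra]).
    assert (0 <= (a^2*E^2 - Q - Lz^2)*r^2) by (apply Rmult_le_pos; nra).
    assert (0 <= 2*M*Kcarter a E Lz Q*r) by (apply Rmult_le_pos; [apply Rmult_le_pos|]; lra).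
    nra.
Qed.
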